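(* Let $\mathcal{F}=\{z\in\Omega:|z|=|z|_i\ge1\}$. For $z\in\mathcal{F}\cap k_{\infty^2}$, one has $\overline{\lambda}(z)=v_n$ if and only if $n=\log_q|z|$.
   Context: $q$ odd prime power, $A=\mathbb{F}_q[T]$, $k_\infty=\mathbb{F}_q((T^{-1}))$, $|T|=q$, $k_{\infty^2}=\mathbb{F}_{q^2}((T^{-1}))$, $\Omega=\mathbb{C}_\infty\smallsetminus k_\infty$, $|z|_i=\min_{w\in k_\infty}|z-w|$, $\Gamma=\mathrm{PGL}_2(A)$. Fix $\boldsymbol{\mathrm i}\in\mathbb{F}_{q^2}$ with $\boldsymbol{\mathrm i}^2\in\mathbb{F}_q^\times\smallsetminus(\mathbb{F}_q^\times)^2$; every $z\in k_{\infty^2}\smallsetminus k_\infty$ is $g\cdot\boldsymbol{\mathrm i}$ for some $g\in\mathrm{GL}_2(k_\infty)$ acting by Möbius transformations. Let $\mathcal{T}$ be the Bruhat–Tits tree of $\mathrm{PGL}_2(k_\infty)$ (vertices: homothety classes of $\mathcal{O}_\infty$-lattices in $k_\infty^2$). The vertex set of $\Gamma\backslash\mathcal{T}$ is $\{v_0,v_1,\dots\}$, $v_n$ the $\Gamma$-orbit of the class of $T^n\mathcal{O}_\infty\oplus\mathcal{O}_\infty$. For such $z=g\cdot\boldsymbol{\mathrm i}$, $\overline{\lambda}(z)$ is the $\Gamma$-orbit of the vertex $g\cdot[\mathcal{O}_\infty\oplus\mathcal{O}_\infty]$ (well defined since the stabilizer of $\boldsymbol{\mathrm i}$ lies in $\mathrm{PGL}_2(\mathcal{O}_\infty)$).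 *)

(* Defs.v *)
(* Concrete model of k_{oo^2} = F_{q^2}((1/T)) as Laurent
   series in 1/T with coefficients in a finite field L of order q^2;
   k_oo = F_q((1/T)) is the sub-ring of series with coefficients in
   F_q = {x in L | x^q = x}. *)
From HB Require Import structures.
From mathcomp Require Import all_boot all_order all_algebra.
From mathcomp Require Import zify.
From Stdlib Require Import ClassicalEpsilon.
Set Implicit Arguments. Unset Strict Implicit. Unset Printing Implicit Defensive.
Import Order.TTheory GRing.Theory Num.Theory.
Local Open Scope ring_scope.

Section Laurent.
Variable L : finFieldType.

(* f k is the coefficient of T^k; finitely many nonzero coefficients of
   positive T-degree large: there is N with f k = 0 for k > N. *)
Definition ls_fin (f : int -> L) : Prop :=
  exists N : int, forall k : int, N < k -> f k = 0.
Definition LS := {f : int -> L | ls_fin f}.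
Definition coef (x : LS) : int -> L := proj1_sig x.

Definition lsbound (x : LS) : int :=
  proj1_sig (constructive_indefinite_description _ (proj2_sig x)).
Lemma lsboundP (x : LS) k : lsbound x < k -> coef x k = 0.
Proof.
rewrite /lsbound; case: constructive_indefinite_description => N HN /=.
exact: HN.
Qed.

Definition ls_eq (x y : LS) : Prop := forall k, coef x k = coef y k.

Lemma add_fin (x y : LS) : ls_fin (fun k => coef x k + coef y k).
Proof.
exists (Num.max (lsbound x) (lsbound y)) => k; rewrite gt_max => /andP[h1 h2].
by rewrite !lsboundP ?addr0.
Qed.
Definition lsadd (x y : LS) : LS := exist _ _ (add_fin x y).

Lemma opp_fin (x : LS) : ls_fin (fun k => - coef x k).
Proof. by exists (lsbound x) => k hk; rewrite lsboundP ?oppr0. Qed.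
Definition lsopp (x : LS) : LS := exist _ _ (opp_fin x).
Definition lssub (x y : LS) : LS := lsadd x (lsopp y).

(* Cauchy product: (xy)_k = sum_i x_i y_(k-i), i ranging over the finite set
   k - bound y <= i <= bound x outside of which the terms vanish. *)
Definition lsmul_coef (x y : LS) (k : int) : L :=
  \sum_(j < absz (lsbound x + lsbound y - k + 1))
     coef x (k - lsbound y + j%:Z) * coef y (lsbound y - j%:Z).
Lemma mul_fin (x y : LS) : ls_fin (lsmul_coef x y).
Proof.
exists (lsbound x + lsbound y) => k hk; rewrite /lsmul_coef big1 // => j _.
rewrite lsboundP ?mul0r //; lia.
Qed.
Definition lsmul (x y : LS) : LS := exist _ _ (mul_fin x y).

Lemma const_fin (a : L) : ls_fin (fun k => if k == 0 then a else 0).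
Proof. by exists 0 => k hk; case: eqP => // e; move: hk; rewrite e ltxx. Qed.
Definition lsconst (a : L) : LS := exist _ _ (const_fin a).
Lemma Tpow_fin (n : int) : ls_fin (fun k => if k == n then 1 else 0).
Proof. by exists n => k hk; case: eqP => // e; move: hk; rewrite e ltxx. Qed.
Definition lsTpow (n : int) : LS := exist _ _ (Tpow_fin n).
Definition ls0 : LS := lsconst 0.
Definition ls1 : LS := lsconst 1.

Definition ls_top (x : LS) (d : int) : Prop :=
  coef x d <> 0 /\ forall k, d < k -> coef x k = 0.
Definition ls_deg (x : LS) : option int :=
  match excluded_middle_informative (exists d, ls_top x d) with
  | left h => Some (proj1_sig (constructive_indefinite_description _ h))
  | right _ => None
  end.
End Laurent.

Section Drinfeld.
Variables (q : nat) (L : finFieldType).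

Definition inFq (a : L) : Prop := a ^+ q = a.
Definition kinf (x : LS L) : Prop := forall k, inFq (coef x k).
Definition Oinf (x : LS L) : Prop := kinf x /\ forall k, 0 < k -> coef x k = 0.
Definition inA (x : LS L) : Prop := kinf x /\ forall k, k < 0 -> coef x k = 0.
Definition unitA (u : LS L) : Prop := exists w, inA w /\ ls_eq (lsmul u w) (ls1 L).

Definition ls_abs (x : LS L) : rat :=
  if ls_deg x is Some d then (q%:Q) ^ d else 0.

Definition is_imag_abs (z : LS L) (r : rat) : Prop :=
  (exists w, kinf w /\ ls_abs (lssub z w) = r) /\
  (forall w, kinf w -> r <= ls_abs (lssub z w)).

Definition inGL2kinf (a b c d : LS L) : Prop :=
  [/\ kinf a, kinf b, kinf c & kinf d] /\
  ~ ls_eq (lssub (lsmul a d) (lsmul b c)) (ls0 L).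

(* g . i = z,  i.e.  z = (a i + b) / (c i + d) *)
Definition mobius_eq (iota : L) (a b c d z : LS L) : Prop :=
  ls_eq (lsmul z (lsadd (lsmul c (lsconst iota)) d))
        (lsadd (lsmul a (lsconst iota)) b).

Definition veq (v w : LS L * LS L) : Prop := ls_eq v.1 w.1 /\ ls_eq v.2 w.2.
Definition matact (a b c d : LS L) (v : LS L * LS L) : LS L * LS L :=
  (lsadd (lsmul a v.1) (lsmul b v.2), lsadd (lsmul c v.1) (lsmul d v.2)).

Definition in_gL0 (a b c d : LS L) (v : LS L * LS L) : Prop :=
  exists x y, [/\ Oinf x, Oinf y & veq v (matact a b c d (x, y))].
Definition in_sLn (s : LS L) (n : nat) (v : LS L * LS L) : Prop :=
  exists x y, [/\ Oinf x, Oinf y &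
     veq v (lsmul s (lsmul (lsTpow L n%:Z) x), lsmul s y)].

(* the Gamma-orbit of the homothety class of g.[O+O] is v_n :
   some gamma in GL_2(A) maps g.(O+O) onto a homothetic of T^n O + O. *)
Definition lambda_is_vn (a b c d : LS L) (n : nat) : Prop :=
  exists al be ga de s : LS L,
    [/\ [/\ inA al, inA be, inA ga & inA de],
        unitA (lssub (lsmul al de) (lsmul be ga)),
        kinf s, ~ ls_eq s (ls0 L) &
        forall v, (exists w, in_gL0 a b c d w /\ veq v (matact al be ga de w))
                  <-> in_sLn s n v].
End Drinfeld.

(* Main.v *)
Require Import Defs.
From HB Require Import structures.
From mathcomp Require Import all_boot all_order all_algebra all_field.
From mathcomp Require Import zify ring lra.
From mathcomp Require boolp.
From Stdlib Require Import Classical ClassicalEpsilon ProofIrrelevance FunctionalExtensionality.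
Unset Printing Implicit Defensive.
Import Order.TTheory GRing.Theory Num.Theory.
Local Open Scope ring_scope.

Section LSring.
Variable L : finFieldType.
Implicit Types x y z : LS L.

Lemma ls_ext x y : ls_eq x y -> x = y.
Proof.
case: x => f hf; case: y => g hg; rewrite /ls_eq /= => e.
have efg : f = g by apply: functional_extensionality.
subst g; congr exist; apply: proof_irrelevance.
Qed.

Definition bnd x (N : int) := forall k, N < k -> coef x k = 0.

Definition W (f g : int -> L) (k lo : int) (len : nat) :=
  \sum_(j < len) f (k - (lo + j%:Z)) * g (lo + j%:Z).

Section Wl.
Variables (f g : int -> L) (Bx By k : int).
Hypotheses (hf : forall i, Bx < i -> f i = 0) (hg : forall i, By < i -> g i = 0).

Lemma W0 lo len : By < k - Bx -> W f g k lo len = 0.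
Proof.
move=> h; rewrite /W big1 // => j _.
have [h1|h1] := ltP By (lo + j%:Z); first by rewrite hg ?mulr0.
by rewrite hf ?mul0r //; lia.
Qed.

Lemma W_extL lo len t : lo <= k - Bx -> W f g k lo len = W f g k (lo - t%:Z) (len + t).
Proof.
move=> h; elim: t => [|t IH]; first by rewrite subr0 addn0.
rewrite IH addnS /W big_ord_recl /= hf ?mul0r ?add0r; last by lia.
apply: eq_bigr => j _; rewrite /bump /=.
have -> : lo - t.+1%:Z + (1 + j)%N%:Z = lo - t%:Z + j%:Z by lia.
by [].
Qed.

Lemma W_extR lo len t : By < lo + len%:Z -> W f g k lo len = W f g k lo (len + t).
Proof.
move=> h; elim: t => [|t IH]; first by rewrite addn0.
rewrite IH addnS /W big_ord_recr /= (hg (lo + (len + t)%N%:Z)) ?mulr0 ?addr0 //; lia.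
Qed.

Lemma W_canon lo len : k - Bx <= By -> lo <= k - Bx -> By < lo + len%:Z ->
  W f g k lo len = W f g k (k - Bx) (absz (By - (k - Bx) + 1)%R).
Proof.
move=> h0 h1 h2.
set t := absz (k - Bx - lo)%R.
rewrite (W_extL (k - Bx)%R _ t) ?lexx //.
have -> : k - Bx - t%:Z = lo by rewrite /t; lia.
set r := (len - (absz (By - (k - Bx) + 1)%R + t))%N.
rewrite [RHS](W_extR lo _ r); last by rewrite /t; lia.
congr W; rewrite /r /t; lia.
Qed.
End Wl.


Lemma bnd_min x N1 N2 : bnd x N1 -> bnd x N2 -> bnd x (Num.min N1 N2).
Proof. by move=> h1 h2; case: (leP N1 N2). Qed.

Lemma bnd_le x N1 N2 : bnd x N1 -> N1 <= N2 -> bnd x N2.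
Proof. move=> h1 h k hk; apply: h1; exact: le_lt_trans hk. Qed.

Lemma bnd_lsbound x : bnd x (lsbound x).
Proof. move=> k; exact: lsboundP. Qed.

Lemma mul_rev x y k : coef (lsmul x y) k =
  W (coef x) (coef y) k (lsbound y - (absz (lsbound x + lsbound y - k + 1)%R)%:Z + 1)
    (absz (lsbound x + lsbound y - k + 1)%R).
Proof.
rewrite /= /lsmul_coef /W (reindex_inj rev_ord_inj) /=.
apply: eq_bigr => j _; have hj := ltn_ord j.
set M := absz _ in hj *.
congr (coef x _ * coef y _); lia.
Qed.

Lemma mulW x y Bx By k lo len : bnd x Bx -> bnd y By -> lo <= k - Bx ->
  By < lo + len%:Z -> coef (lsmul x y) k = W (coef x) (coef y) k lo len.
Proof.
move=> hx hy h1 h2; rewrite mul_rev.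
set bx := lsbound x; set by' := lsbound y.
have hx' := bnd_min _ _ _ hx (bnd_lsbound x); have hy' := bnd_min _ _ _ hy (bnd_lsbound y).
have m1 : Num.min Bx bx <= Bx by rewrite ge_min lexx.
have m2 : Num.min Bx bx <= bx by rewrite ge_min lexx orbT.
have m3 : Num.min By by' <= By by rewrite ge_min lexx.
have m4 : Num.min By by' <= by' by rewrite ge_min lexx orbT.
set Bx' := Num.min Bx bx in hx' m1 m2 *; set By' := Num.min By by' in hy' m3 m4 *.
have [h|h] := ltP By' (k - Bx').
  by rewrite (W0 _ _ _ _ _ hx' hy') // (W0 _ _ _ _ _ hx' hy').
have e : absz (bx + by' - k + 1)%R = (bx + by' - k + 1)%R :> int by lia.
rewrite (W_canon _ _ _ _ _ hx' hy' _ _ h); [|lia|lia].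
rewrite (W_canon _ _ _ _ _ hx' hy' _ _ h) //; lia.
Qed.

Lemma coef_add x y k : coef (lsadd x y) k = coef x k + coef y k.
Proof. by []. Qed.

Definition pl x (N : int) (n : nat) : {poly L} := \poly_(i < n.+1) coef x (N - i%:Z).

Lemma coef_pl x N n i : (i <= n)%N -> (pl x N n)`_i = coef x (N - i%:Z).
Proof. by move=> h; rewrite /pl coef_poly ltnS h. Qed.

Lemma mulP x y Nx Ny n : bnd x Nx -> bnd y Ny ->
  coef (lsmul x y) (Nx + Ny - n%:Z) = (pl x Nx n * pl y Ny n)`_n.
Proof.
move=> hx hy; rewrite (mulW x y Nx Ny _ (Ny - n%:Z)%R n.+1 hx hy); [|lia|lia].
rewrite coefM /W; apply: eq_bigr => i _; have hi := ltn_ord i.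
rewrite !coef_pl; [|lia|lia]; congr (coef x _ * coef y _); lia.
Qed.

Lemma mul_bnd x y Nx Ny : bnd x Nx -> bnd y Ny -> bnd (lsmul x y) (Nx + Ny).
Proof.
move=> hx hy k hk; rewrite (mulW x y Nx Ny _ (k - Nx)%R 0 hx hy); [|lia|lia].
by rewrite /W big_ord0.
Qed.

Lemma coef_cases (P : int -> Prop) (N : int) : (forall k, N < k -> P k) ->
  (forall n : nat, P (N - n%:Z)) -> forall k, P k.
Proof.
move=> h1 h2 k; case: (ltP N k) => hk; first exact: h1.
have -> : k = N - (absz (N - k)%R)%:Z by lia.
exact: h2.
Qed.

Lemma coefM_agree (p p' r r' : {poly L}) n :
  (forall i, (i <= n)%N -> p`_i = p'`_i) -> (forall i, (i <= n)%N -> r`_i = r'`_i) ->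
  (p * r)`_n = (p' * r')`_n.
Proof.
move=> h1 h2; rewrite !coefM; apply: eq_bigr => i _; have hi := ltn_ord i.
by rewrite h1 ?h2 //; lia.
Qed.

Lemma pl_mul_agree x y Nx Ny n i : bnd x Nx -> bnd y Ny -> (i <= n)%N ->
  (pl (lsmul x y) (Nx + Ny) n)`_i = (pl x Nx n * pl y Ny n)`_i.
Proof.
move=> hx hy hi; rewrite coef_pl // (mulP _ _ _ _ _ hx hy).
apply: coefM_agree => j hj; rewrite !coef_pl //; lia.
Qed.

Lemma lsmulC x y : lsmul x y = lsmul y x.
Proof.
apply: ls_ext; set Nx := lsbound x; set Ny := lsbound y.
have hx := bnd_lsbound x; have hy := bnd_lsbound y.
apply: (coef_cases _ (Nx + Ny)) => [k hk|n].
  by rewrite (mul_bnd _ _ _ _ hx hy) // (mul_bnd _ _ _ _ hy hx) // addrC.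
rewrite (mulP _ _ _ _ _ hx hy).
have -> : Nx + Ny - n%:Z = Ny + Nx - n%:Z by rewrite (addrC Nx).
by rewrite (mulP _ _ _ _ _ hy hx) mulrC.
Qed.

Lemma lsmulA x y z : lsmul x (lsmul y z) = lsmul (lsmul x y) z.
Proof.
apply: ls_ext; set Nx := lsbound x; set Ny := lsbound y; set Nz := lsbound z.
have hx := bnd_lsbound x; have hy := bnd_lsbound y; have hz := bnd_lsbound z.
have hyz := mul_bnd _ _ _ _ hy hz; have hxy := mul_bnd _ _ _ _ hx hy.
apply: (coef_cases _ (Nx + Ny + Nz)) => [k hk|n].
  rewrite (mul_bnd _ _ _ _ hx hyz) ?addrA // (mul_bnd _ _ _ _ hxy hz) //.
rewrite (mulP _ _ _ _ _ hxy hz).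
rewrite [X in coef (lsmul x _) X](_ : _ = Nx + (Ny + Nz) - n%:Z); last by rewrite addrA.
rewrite (mulP _ _ _ _ _ hx hyz).
transitivity ((pl x Nx n * (pl y Ny n * pl z Nz n))`_n).
  by apply: coefM_agree => // i hi; rewrite pl_mul_agree.
rewrite mulrA; apply: coefM_agree => // i hi; rewrite pl_mul_agree //.
Qed.

Lemma coef_ls1 k : coef (ls1 L) k = (k == 0)%:R.
Proof. by rewrite /=; case: (k == 0). Qed.

Lemma bnd_const a : bnd (lsconst a) 0.
Proof. by move=> k hk /=; case: eqP => // e; move: hk; rewrite e ltxx. Qed.

Lemma ls1_mul x : lsmul (ls1 L) x = x.
Proof.
apply: ls_ext; set Nx := lsbound x; have hx := bnd_lsbound x.
have h1 := bnd_const (1 : L).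
apply: (coef_cases _ (0 + Nx)) => [k hk|n].
  by rewrite (mul_bnd _ _ _ _ h1 hx) // hx //; lia.
rewrite (mulP _ _ _ _ _ h1 hx) coefM big_ord_recl big1 ?addr0.
  by rewrite !coef_pl //= ?subr0 ?add0r ?subn0 // mul1r.
move=> i _; rewrite coef_pl /=; last by case: i => i /= hi; rewrite /bump /=; lia.
by rewrite mul0r.
Qed.

Lemma lsmulDl x y z : lsmul (lsadd x y) z = lsadd (lsmul x z) (lsmul y z).
Proof.
apply: ls_ext; set N := Num.max (lsbound x) (lsbound y); set Nz := lsbound z.
have hx : bnd x N by apply: (bnd_le _ _ _ (bnd_lsbound x)); rewrite le_max lexx.
have hy : bnd y N by apply: (bnd_le _ _ _ (bnd_lsbound y)); rewrite le_max lexx orbT.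
have hz := bnd_lsbound z.
have hxy : bnd (lsadd x y) N by move=> k hk /=; rewrite hx ?hy ?addr0.
apply: (coef_cases _ (N + Nz)) => [k hk|n]; rewrite coef_add.
  by rewrite (mul_bnd _ _ _ _ hxy hz) // (mul_bnd _ _ _ _ hx hz) // (mul_bnd _ _ _ _ hy hz) // addr0.
rewrite (mulP _ _ _ _ _ hxy hz) (mulP _ _ _ _ _ hx hz) (mulP _ _ _ _ _ hy hz) -coefD -mulrDl.
apply: coefM_agree => // i hi; rewrite coefD !coef_pl //.
Qed.
End LSring.
Arguments bnd {L}.
Arguments pl {L}.


HB.instance Definition LS_eqM (L : finFieldType) := boolp.gen_eqMixin (LS L).
HB.instance Definition LS_choiceM (L : finFieldType) := boolp.gen_choiceMixin (LS L).

Lemma lsaddA (L : finFieldType) : associative (@lsadd L).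
Proof. by move=> x y z; apply: ls_ext => k; rewrite /= addrA. Qed.
Lemma lsaddC (L : finFieldType) : commutative (@lsadd L).
Proof. by move=> x y; apply: ls_ext => k; rewrite /= addrC. Qed.
Lemma ls0_add (L : finFieldType) : left_id (ls0 L) (@lsadd L).
Proof. by move=> x; apply: ls_ext => k; rewrite /=; case: (k == 0); rewrite add0r. Qed.
Lemma lsaddN (L : finFieldType) : left_inverse (ls0 L) (@lsopp L) (@lsadd L).
Proof. by move=> x; apply: ls_ext => k; rewrite /= addNr; case: (k == 0). Qed.

HB.instance Definition LS_zmod (L : finFieldType) :=
  GRing.isZmodule.Build (LS L) (@lsaddA L) (@lsaddC L) (@ls0_add L) (@lsaddN L).

Lemma ls1_neq0 (L : finFieldType) : ls1 L != ls0 L.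
Proof.
apply/eqP => e; have := f_equal (fun x => coef x 0) e; rewrite /=.
by move/eqP; rewrite oner_eq0.
Qed.

HB.instance Definition LS_ring (L : finFieldType) := GRing.Zmodule_isComNzRing.Build (LS L)
  (@lsmulA L) (@lsmulC L) (@ls1_mul L) (@lsmulDl L) (@ls1_neq0 L).

Lemma test (L : finFieldType) (x y : LS L) : lsmul x (lsadd y x) = lsadd (lsmul x x) (lsmul y x).
Proof. change (x * (y + x) = x * x + y * x). ring. Qed.


Section Deg.
Context {L : finFieldType}.
Implicit Types x y z : LS L.

Lemma lsaddE x y : lsadd x y = x + y. Proof. by []. Qed.
Lemma lsmulE x y : lsmul x y = x * y. Proof. by []. Qed.
Lemma lsoppE x : lsopp x = - x. Proof. by []. Qed.
Lemma lssubE x y : lssub x y = x - y. Proof. by []. Qed.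
Lemma ls0E : ls0 L = 0. Proof. by []. Qed.
Lemma ls1E : ls1 L = 1. Proof. by []. Qed.
Definition lsE := (lsaddE, lsmulE, lssubE, lsoppE, ls0E, ls1E).

Lemma lcD x y k : coef (x + y) k = coef x k + coef y k. Proof. by []. Qed.
Lemma lcN x k : coef (- x) k = - coef x k. Proof. by []. Qed.
Lemma lcB x y k : coef (x - y) k = coef x k - coef y k. Proof. by []. Qed.
Lemma lc0 k : coef (0 : LS L) k = 0. Proof. by rewrite /=; case: (k == 0). Qed.
Lemma lcC (a : L) k : coef (lsconst a) k = if k == 0 then a else 0. Proof. by []. Qed.
Lemma lcT a k : coef (lsTpow L a) k = if k == a then 1 else 0. Proof. by []. Qed.

Lemma ls_extE x y : (forall k, coef x k = coef y k) -> x = y.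
Proof. exact: ls_ext. Qed.

Lemma bnd_add x y N : bnd x N -> bnd y N -> bnd (x + y) N.
Proof. by move=> h1 h2 k hk; rewrite lcD h1 ?h2 ?addr0. Qed.
Lemma bnd_opp x N : bnd x N -> bnd (- x) N.
Proof. by move=> h1 k hk; rewrite lcN h1 ?oppr0. Qed.
Lemma bnd_sub x y N : bnd x N -> bnd y N -> bnd (x - y) N.
Proof. by move=> h1 h2; apply: bnd_add => //; apply: bnd_opp. Qed.
Lemma bnd_mul x y Nx Ny : bnd x Nx -> bnd y Ny -> bnd (x * y) (Nx + Ny).
Proof. exact: mul_bnd. Qed.
Lemma bnd0 N : bnd (0 : LS L) N.
Proof. by move=> k _; rewrite lc0. Qed.
Lemma bndT a : bnd (lsTpow L a) a.
Proof. by move=> k hk; rewrite lcT; case: eqP => // e; move: hk; rewrite e ltxx. Qed.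
Lemma bndC (a : L) : bnd (lsconst a) 0.
Proof. exact: bnd_const. Qed.
Lemma bnd_mono x N M : bnd x N -> N <= M -> bnd x M.
Proof. exact: bnd_le. Qed.

Lemma coef_mul_top x y Nx Ny : bnd x Nx -> bnd y Ny ->
  coef (x * y) (Nx + Ny) = coef x Nx * coef y Ny.
Proof.
move=> hx hy; have := mulP _ x y Nx Ny 0 hx hy.
rewrite subr0 => ->; rewrite coefM big_ord1 !coef_pl //.
by rewrite !subr0.
Qed.

Lemma pl_C (a : L) n : pl (lsconst a) 0 n = a%:P.
Proof.
apply/polyP => i; rewrite coef_poly lcC coefC.
case: (ltnP i n.+1) => hi; last by case: i hi.
by case: i hi => [|i] hi.
Qed.

Lemma pl_T a n : pl (lsTpow L a) a n = 1.
Proof.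
apply/polyP => i; rewrite coef_poly lcT coef1.
case: (ltnP i n.+1) => hi; last by case: i hi.
case: i hi => [|i] hi /=; first by rewrite subr0 eqxx.
by case: eqP => // e; lia.
Qed.

Lemma lcCM (a : L) x k : coef (lsconst a * x) k = a * coef x k.
Proof.
have hx := bnd_lsbound _ x; have ha := bndC a.
move: k; apply: (coef_cases _ (0 + lsbound x)) => [k hk|n].
  by rewrite (bnd_mul _ _ _ _ ha hx) // hx ?mulr0 //; lia.
by rewrite (mulP _ _ _ _ _ _ ha hx) pl_C coefCM coef_pl // add0r.
Qed.

Lemma lcTM a x k : coef (lsTpow L a * x) k = coef x (k - a).
Proof.
have hx := bnd_lsbound _ x; have ha := bndT a.
move: k; apply: (coef_cases _ (a + lsbound x)) => [k hk|n].
  by rewrite (bnd_mul _ _ _ _ ha hx) // hx //; lia.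
rewrite (mulP _ _ _ _ _ _ ha hx) pl_T mul1r coef_pl //; congr coef; lia.
Qed.

Lemma TT a b : lsTpow L a * lsTpow L b = lsTpow L (a + b).
Proof.
apply: ls_extE => k; rewrite lcTM !lcT.
by case: eqP => e; case: eqP => e' //; exfalso; lia.
Qed.

Lemma T0 : lsTpow L 0 = 1.
Proof. by apply: ls_extE => k; rewrite lcT. Qed.

Lemma CC (a b : L) : lsconst a * lsconst b = lsconst (a * b).
Proof. by apply: ls_extE => k; rewrite lcCM !lcC; case: eqP; rewrite ?mulr0. Qed.

Lemma CD (a b : L) : lsconst a + lsconst b = lsconst (a + b).
Proof. by apply: ls_extE => k; rewrite lcD !lcC; case: eqP; rewrite ?addr0. Qed.

Lemma C1 : lsconst (1 : L) = 1. Proof. by []. Qed.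

Lemma top_uniq x d1 d2 : ls_top x d1 -> ls_top x d2 -> d1 = d2.
Proof.
case=> h1 b1 [h2 b2]; case: (ltgtP d1 d2) => // e.
  by case: h2; apply: b1.
by case: h1; apply: b2.
Qed.

Lemma top_le x d N : ls_top x d -> bnd x N -> d <= N.
Proof. by case=> h _ b; case: (leP d N) => // e; case: h; apply: b. Qed.

Lemma top_exists x : x <> 0 -> exists d, ls_top x d.
Proof.
move=> nz.
have [k0 hk0] : exists k, coef x k <> 0.
  apply: NNPP => hn; apply: nz; apply: ls_extE => k; rewrite lc0.
  by apply: NNPP => hk; apply: hn; exists k.
set N := lsbound x; have hN := bnd_lsbound _ x.
have k0N : k0 <= N by case: (leP k0 N) => // e; case: hk0; apply: hN.
have ex : exists n, coef x (N - n%:Z) != 0.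
  by exists (absz (N - k0)%R); apply/eqP; have -> : N - (absz (N - k0)%R)%:Z = k0 by lia.
exists (N - (ex_minn ex)%:Z).
case: ex_minnP => n hn hmin; split; first exact/eqP.
move=> k hk; case: (ltP N k) => h; first exact: hN.
have -> : k = N - (absz (N - k)%R)%:Z by lia.
apply/eqP; apply: contraT => hh; have := hmin _ hh; lia.
Qed.

Lemma top_mul x y a b : ls_top x a -> ls_top y b -> ls_top (x * y) (a + b).
Proof.
case=> ha ba [hb bb]; split; last exact: bnd_mul.
by rewrite coef_mul_top // => /eqP; rewrite mulf_eq0 => /orP [] /eqP.
Qed.

Lemma top_neq0 x d : ls_top x d -> x <> 0.
Proof. by case=> h _ e; apply: h; rewrite e lc0. Qed.

Lemma topT a : ls_top (lsTpow L a) a.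
Proof. by split; [rewrite lcT eqxx; apply/eqP; exact: oner_neq0 | exact: bndT]. Qed.

Lemma top_mul_inv x y a b : ls_top (x * y) a -> ls_top x b -> x * y <> 0 ->
  exists c, ls_top y c /\ a = b + c.
Proof.
move=> ha hb nz; have ynz : y <> 0 by move=> e; apply: nz; rewrite e mulr0.
have [c hc] := top_exists y ynz; exists c; split => //.
exact: top_uniq ha (top_mul _ _ _ _ hb hc).
Qed.

Definition low x := forall k, k < 0 -> coef x k = 0.

Lemma low_top x d : low x -> ls_top x d -> 0 <= d.
Proof. by move=> hl [h _]; case: (leP 0 d) => // e; case: h; apply: hl. Qed.

Lemma low_mul x y : low x -> low y -> low (x * y).
Proof.
move=> hx hy k hk.
have bx := bnd_lsbound _ x; have by' := bnd_lsbound _ y.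
rewrite (mulW _ x y _ _ k (k - lsbound x)%R (absz (lsbound y - (k - lsbound x))%R).+1 bx by'); [|lia|lia].
rewrite /W big1 // => j _.
case: (ltP (k - lsbound x + j%:Z) 0) => h; first by rewrite hy ?mulr0.
by rewrite hx ?mul0r //; lia.
Qed.

Lemma low_add x y : low x -> low y -> low (x + y).
Proof. by move=> h1 h2 k hk; rewrite lcD h1 ?h2 ?addr0. Qed.
Lemma low_opp x : low x -> low (- x).
Proof. by move=> h1 k hk; rewrite lcN h1 ?oppr0. Qed.
Lemma low_sub x y : low x -> low y -> low (x - y).
Proof. by move=> h1 h2; apply: low_add => //; apply: low_opp. Qed.
Lemma low_C (a : L) : low (lsconst a).
Proof. by move=> k hk; rewrite lcC; case: eqP => // e; move: hk; rewrite e ltxx. Qed.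

End Deg.


Section Inv.
Context {L : finFieldType}.
Implicit Types x y z : LS L.

Definition eqm (m : nat) (A B : {poly L}) := forall i, (i <= m)%N -> A`_i = B`_i.

Lemma eqm_le m m' A B : eqm m A B -> (m' <= m)%N -> eqm m' A B.
Proof. by move=> h hm i hi; apply: h; apply: leq_trans hm. Qed.

Lemma eqm_mul m A A' B B' : eqm m A A' -> eqm m B B' -> eqm m (A * B) (A' * B').
Proof.
move=> h1 h2 i hi; apply: coefM_agree => j hj.
  by apply: h1; apply: leq_trans hi.
by apply: h2; apply: leq_trans hi.
Qed.

Lemma eqm_refl m A : eqm m A A. Proof. by []. Qed.
Arguments eqm_refl {m} A.
Arguments eqm_mul {m A A' B B'}.
Arguments eqm_le {m m' A B}.

Lemma eqm_uniq {m P A B} : eqm m (P * A) 1 -> eqm m (P * B) 1 -> eqm m A B.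
Proof.
move=> h1 h2 i hi.
have e1 := eqm_mul (eqm_refl A) h2 i hi.
have e2 := eqm_mul h1 (eqm_refl B) i hi.
rewrite -[A]mulr1 -e1 mulrA [A * P]mulrC e2 mul1r //.
Qed.

Lemma powX (R : {poly L}) m : R`_0 = 0 -> forall i, (i < m)%N -> (R ^+ m)`_i = 0.
Proof.
move=> h0; elim: m => [|m IH] i hi //.
rewrite exprS coefM big1 // => j _.
case: j => [[|j]] hj /=; first by rewrite h0 mul0r.
by rewrite IH ?mulr0 //; lia.
Qed.

Definition polinv (P : {poly L}) (n : nat) : {poly L} :=
  (P`_0)^-1%:P * \sum_(j < n.+1) (1 - (P`_0)^-1%:P * P) ^+ j.

Lemma polinvP (P : {poly L}) n : P`_0 != 0 -> eqm n (P * polinv P n) 1.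
Proof.
move=> h0; set c := P`_0; set R := 1 - c^-1%:P * P.
have R0 : R`_0 = 0 by rewrite /R coefB coef1 coefCM -/c mulVf // subrr.
have e : P * polinv P n = 1 - R ^+ n.+1.
  rewrite /polinv -/c -/R mulrA.
  have -> : P * c^-1%:P = 1 - R by rewrite /R opprB addrC subrK mulrC.
  by rewrite -(opprB (R ^+ n.+1) 1) (subrX1 R n.+1) -mulNr (opprB R 1).
move=> i hi; rewrite e coefB powX // ?subr0 //.
Qed.

Lemma coef_pl0 x N n : (pl x N n)`_0 = coef x N.
Proof. by rewrite coef_pl // subr0. Qed.

Lemma inv_fin x t : ls_fin (fun k => if k <= - t then
   (polinv (pl x t (absz (- t - k)%R)) (absz (- t - k)%R))`_(absz (- t - k)%R) else 0).
Proof. by exists (- t) => k hk; case: leP => // e; lia. Qed.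

Definition lsinv x t : LS L := exist _ _ (inv_fin x t).

Lemma lsinvP x t : ls_top x t -> x * lsinv x t = 1 /\ bnd (lsinv x t) (- t).
Proof.
case=> hxt hbx.
have hb : bnd (lsinv x t) (- t) by move=> k hk /=; case: leP => // e; lia.
split => //; apply: ls_extE; apply: (coef_cases _ (t + - t)) => [k hk|n].
  rewrite (bnd_mul _ _ _ _ hbx hb) //= ; case: eqP => // e; lia.
rewrite (mulP _ _ _ _ _ _ hbx hb).
have ag : eqm n (pl (lsinv x t) (- t) n) (polinv (pl x t n) n).
  move=> i hi; rewrite coef_pl //=.
  have -> : (- t - i%:Z <= - t) = true by lia.
  have -> : absz (- t - (- t - i%:Z))%R = i by lia.
  have nz : forall m, (pl x t m)`_0 != 0 by move=> m; rewrite coef_pl0; apply/eqP.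
  apply: (@eqm_uniq i (pl x t i)) => //.
  - exact: polinvP.
  - move=> j hj; rewrite -(polinvP _ n (nz n) j (leq_trans hj hi)).
    have ag2 : eqm i (pl x t i) (pl x t n) by move=> l hl; rewrite !coef_pl //; lia.
    exact: (eqm_mul ag2 (eqm_refl _) j hj).
have -> : (pl x t n * pl (lsinv x t) (- t) n)`_n = (pl x t n * polinv (pl x t n) n)`_n.
  exact: (eqm_mul (eqm_refl _) ag n (leqnn n)).
rewrite (polinvP _ n _ n (leqnn n)); last by rewrite coef_pl0; apply/eqP.
rewrite coef1 /=; clear ag; case: n => [|n] /=; first by rewrite subrr.
by case: eqP => // e; lia.
Qed.

Lemma inv_exists x t : ls_top x t -> exists y, x * y = 1 /\ bnd y (- t).
Proof. by move=> h; exists (lsinv x t); apply: lsinvP. Qed.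

End Inv.


Section Frob.
Variables (q : nat) (L : finFieldType).
Hypothesis hL : #|L| = (q ^ 2)%N.
Implicit Types x y z : LS L.

Lemma qnat : ([char L]%R).-nat q.
Proof.
have [p pp pc] := finPcharP L.
have h := pprimeChar_pgroup pc.
rewrite /pgroup.pgroup cardsT in h.
have h2 : p.-nat (q ^ 2)%N by rewrite -hL.
rewrite pnatX /= orbF in h2.
by rewrite (eq_pnat _ (pcharf_eq pc)).
Qed.

Lemma q_gt0 : (0 < q)%N.
Proof. by case: q hL => // h; have := finNzRing_gt1 L; rewrite h. Qed.

Lemma frobD (a b : L) : (a + b) ^+ q = a ^+ q + b ^+ q.
Proof. exact: exprDn_pchar qnat. Qed.
Lemma frobN (a : L) : (- a) ^+ q = - a ^+ q.
Proof. exact: exprNn_pchar qnat. Qed.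
Lemma frob0 : (0 : L) ^+ q = 0.
Proof. by rewrite expr0n; case: q q_gt0. Qed.
Lemma frob_sum n (F : 'I_n -> L) : (\sum_(j < n) F j) ^+ q = \sum_(j < n) (F j) ^+ q.
Proof.
elim/big_rec2: _ => [|j y1 y2 _ <-]; first exact: frob0.
by rewrite frobD.
Qed.
Lemma frobqq (a : L) : (a ^+ q) ^+ q = a.
Proof. by rewrite -exprM mulnn -hL expf_card. Qed.

Lemma F0 : inFq q (0 : L). Proof. exact: frob0. Qed.
Lemma F1 : inFq q (1 : L). Proof. exact: expr1n. Qed.
Lemma Fadd (a b : L) : inFq q a -> inFq q b -> inFq q (a + b).
Proof. by rewrite /inFq frobD => -> ->. Qed.
Lemma Fopp (a : L) : inFq q a -> inFq q (- a).
Proof. by rewrite /inFq frobN => ->. Qed.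
Lemma Fsub (a b : L) : inFq q a -> inFq q b -> inFq q (a - b).
Proof. by move=> ha hb; apply: Fadd => //; apply: Fopp. Qed.
Lemma Fmul (a b : L) : inFq q a -> inFq q b -> inFq q (a * b).
Proof. by rewrite /inFq exprMn => -> ->. Qed.
Lemma Finv (a : L) : inFq q a -> inFq q a^-1.
Proof. by rewrite /inFq exprVn => ->. Qed.

Lemma fin_frob x : ls_fin (fun k => coef x k ^+ q).
Proof. by exists (lsbound x) => k hk; rewrite lsboundP // frob0. Qed.
Definition lsfrob x : LS L := exist _ _ (fin_frob x).

Lemma kinf_frob x : kinf q x <-> lsfrob x = x.
Proof.
split => [h|h k]; first by apply: ls_extE => k /=; apply: h.
by have := f_equal (fun y => coef y k) h.
Qed.

Lemma frob_mul x y : lsfrob (x * y) = lsfrob x * lsfrob y.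
Proof.
apply: ls_extE => k.
have bx := bnd_lsbound _ x; have by' := bnd_lsbound _ y.
have fbx : bnd (lsfrob x) (lsbound x) by move=> i hi /=; rewrite bx // frob0.
have fby : bnd (lsfrob y) (lsbound y) by move=> i hi /=; rewrite by' // frob0.
set lo := (k - lsbound x)%R; set len := (absz (lsbound y - (k - lsbound x))%R).+1.
have h1 : lo <= k - lsbound x by rewrite lexx.
have h2 : lsbound y < lo + len%:Z by rewrite /lo /len; lia.
rewrite /= -/(lsmul_coef _ _ _).
have -> : lsmul_coef x y k = coef (x * y) k by [].
have -> : lsmul_coef (lsfrob x) (lsfrob y) k = coef (lsfrob x * lsfrob y) k by [].
rewrite (mulW _ _ _ _ _ _ _ _ bx by' h1 h2) (mulW _ _ _ _ _ _ _ _ fbx fby h1 h2).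
by rewrite /W frob_sum; apply: eq_bigr => j _; rewrite exprMn.
Qed.

Lemma kinf_mul x y : kinf q x -> kinf q y -> kinf q (x * y).
Proof. by move=> /kinf_frob hx /kinf_frob hy; apply/kinf_frob; rewrite frob_mul hx hy. Qed.
Lemma kinf_add x y : kinf q x -> kinf q y -> kinf q (x + y).
Proof. by move=> hx hy k; apply: Fadd. Qed.
Lemma kinf_opp x : kinf q x -> kinf q (- x).
Proof. by move=> hx k; apply: Fopp. Qed.
Lemma kinf_sub x y : kinf q x -> kinf q y -> kinf q (x - y).
Proof. by move=> hx hy k; apply: Fsub. Qed.
Lemma kinf_C (a : L) : inFq q a -> kinf q (lsconst a).
Proof. by move=> ha k; rewrite lcC; case: eqP => // _; apply: F0. Qed.
Lemma kinf_T a : kinf q (lsTpow L a).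
Proof. by move=> k; rewrite lcT; case: eqP => _; [apply: F1 | apply: F0]. Qed.
Lemma kinf_0 : kinf q (0 : LS L). Proof. exact: kinf_C F0. Qed.
Lemma kinf_1 : kinf q (1 : LS L). Proof. exact: kinf_C F1. Qed.

Lemma frob1 : lsfrob 1 = 1.
Proof. by apply/kinf_frob; apply: kinf_1. Qed.

Lemma kinf_inv x y : kinf q x -> x * y = 1 -> kinf q y.
Proof.
move=> /kinf_frob hx hxy; apply/kinf_frob.
have e : x * lsfrob y = 1 by rewrite -{1}hx -frob_mul hxy frob1.
by rewrite -[lsfrob y]mul1r -hxy mulrC mulrA [lsfrob y * x]mulrC e mul1r.
Qed.
End Frob.


Section Iota.
Variables (q : nat) (L : finFieldType).
Hypothesis hL : #|L| = (q ^ 2)%N.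
Variable iota : L.
Hypotheses (hi0 : iota ^+ 2 != 0) (hiq : inFq q (iota ^+ 2))
  (hisq : ~ (exists s : L, inFq q s /\ s ^+ 2 = iota ^+ 2)).
Implicit Types x y z : LS L.

Lemma iota_neq0 : iota != 0.
Proof. by apply: contra hi0 => /eqP ->; rewrite expr0n. Qed.

Lemma iota_notF : ~ inFq q iota.
Proof. by move=> h; apply: hisq; exists iota. Qed.

Lemma iq : iota ^+ q = - iota.
Proof.
have h : (iota ^+ q) ^+ 2 = iota ^+ 2 by rewrite exprAC hiq.
have : (iota ^+ q - iota) * (iota ^+ q + iota) == 0 by rewrite -subr_sqr h subrr.
rewrite mulf_eq0 => /orP [|]; first by rewrite subr_eq0 => /eqP h'; case: iota_notF.
by rewrite addr_eq0 => /eqP.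
Qed.

Lemma two_neq0 : (2 : L) != 0.
Proof.
apply/negP => /eqP h2; apply: iota_notF; rewrite /inFq iq.
by apply/eqP; rewrite eq_sym -subr_eq0 opprK -mulr2n -mulr_natr h2 mulr0.
Qed.

Lemma two_q : (2 : L) ^+ q = 2.
Proof. by rewrite (frobD _ _ hL) expr1n. Qed.

Definition uf (a : L) := (a + a ^+ q) / 2.
Definition vf (a : L) := (a - a ^+ q) / (2 * iota).

Lemma uf_F a : inFq q (uf a).
Proof.
rewrite /inFq /uf exprMn exprVn two_q (frobD _ _ hL) (frobqq _ _ hL) addrC //.
Qed.

Lemma vf_F a : inFq q (vf a).
Proof.
rewrite /inFq /vf exprMn exprVn exprMn two_q iq (frobD _ _ hL) (frobN _ _ hL) (frobqq _ _ hL).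
rewrite mulrN invrN mulrN -mulNr opprB //.
Qed.

Lemma ufvf a : uf a + vf a * iota = a.
Proof.
have h2 := two_neq0; have hi := iota_neq0.
by rewrite /uf /vf; field; rewrite hi h2.
Qed.

Lemma uf0 : uf 0 = 0. Proof. by rewrite /uf (frob0 _ _ hL) addr0 mul0r. Qed.
Lemma vf0 : vf 0 = 0. Proof. by rewrite /vf (frob0 _ _ hL) subr0 mul0r. Qed.

Lemma sepF (u v : L) : inFq q u -> inFq q v -> u + v * iota = 0 -> u = 0 /\ v = 0.
Proof.
move=> hu hv e.
have hv0 : v = 0.
  apply/eqP; apply: contraT => nz; case: iota_notF.
  have e' : v * iota = - u by apply/eqP; rewrite -addr_eq0 addrC e.
  have -> : iota = - u / v by rewrite -e' mulrC mulKf.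
  by apply: Fmul; [apply: (Fopp _ _ hL) | apply: Finv].
by split => //; move: e; rewrite hv0 mul0r addr0.
Qed.

Lemma fin_u z : ls_fin (fun k => uf (coef z k)).
Proof. by exists (lsbound z) => k hk; rewrite lsboundP // uf0. Qed.
Lemma fin_v z : ls_fin (fun k => vf (coef z k)).
Proof. by exists (lsbound z) => k hk; rewrite lsboundP // vf0. Qed.
Definition lsu z : LS L := exist _ _ (fin_u z).
Definition lsv z : LS L := exist _ _ (fin_v z).

Lemma kinf_u z : kinf q (lsu z). Proof. by move=> k; apply: uf_F. Qed.
Lemma kinf_v z : kinf q (lsv z). Proof. by move=> k; apply: vf_F. Qed.
Lemma uv_dec z : z = lsu z + lsv z * lsconst iota.
Proof. by apply: ls_extE => k; rewrite lcD mulrC lcCM /= mulrC ufvf. Qed.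
Lemma bnd_u z N : bnd z N -> bnd (lsu z) N.
Proof. by move=> h k hk /=; rewrite h // uf0. Qed.
Lemma bnd_v z N : bnd z N -> bnd (lsv z) N.
Proof. by move=> h k hk /=; rewrite h // vf0. Qed.

Lemma sepS x y : kinf q x -> kinf q y -> x + y * lsconst iota = 0 -> x = 0 /\ y = 0.
Proof.
move=> hx hy e.
have h : forall k, coef x k = 0 /\ coef y k = 0.
  move=> k; apply: sepF => //; have := f_equal (fun w => coef w k) e.
  by rewrite lcD mulrC lcCM lc0 mulrC.
by split; apply: ls_extE => k; rewrite lc0; case: (h k).
Qed.
End Iota.


Section Aux.
Context {L : finFieldType}.
Implicit Types x y z : LS L.

Lemma ls_eqP x y : ls_eq x y <-> x = y.
Proof. by split; [apply: ls_ext | move=> -> k]. Qed.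

Lemma veqP (v w : LS L * LS L) : veq v w <-> v.1 = w.1 /\ v.2 = w.2.
Proof. by rewrite /veq !ls_eqP. Qed.

Lemma ls_abs_top (q : nat) x d : ls_top x d -> ls_abs q x = (q%:Q) ^ d.
Proof.
move=> h; rewrite /ls_abs /ls_deg; case: excluded_middle_informative => [e|e].
  by case: constructive_indefinite_description => d' hd' /=; rewrite (top_uniq _ _ _ hd' h).
by case: e; exists d.
Qed.

Lemma ls_abs0 (q : nat) : ls_abs q (0 : LS L) = 0.
Proof.
rewrite /ls_abs /ls_deg; case: excluded_middle_informative => [e|//].
by exfalso; case: e => d [h _]; apply: h; rewrite lc0.
Qed.

Lemma exists_m (c d : LS L) : c <> 0 \/ d <> 0 ->
  exists m, [/\ bnd c m, bnd d m & (coef c m <> 0 \/ coef d m <> 0)].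
Proof.
move=> h; case: (classic (c = 0)) => [c0|cn].
  have dn : d <> 0 by case: h.
  have [td [h1 h2]] := top_exists _ dn.
  by exists td; split => //; [rewrite c0; apply: bnd0 | right].
case: (classic (d = 0)) => [d0|dn].
  have [tc [h1 h2]] := top_exists _ cn.
  by exists tc; split => //; [rewrite d0; apply: bnd0 | left].
have [tc [h1 h2]] := top_exists _ cn; have [td [h3 h4]] := top_exists _ dn.
case: (leP tc td) => e.
  by exists td; split => //; [apply: bnd_mono _ _ _ h2 e | right].
by exists tc; split => //; [apply: bnd_mono _ _ _ h4 (ltW e) | left].
Qed.

Lemma Tcancel a x : lsTpow L a * (lsTpow L (- a) * x) = x.
Proof. by rewrite mulrA TT subrr T0 mul1r. Qed.

Lemma topC (a : L) : a != 0 -> ls_top (lsconst a) 0.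
Proof. by move=> h; split; [rewrite lcC eqxx; apply/eqP | apply: bndC]. Qed.

End Aux.


Ltac lsn := rewrite ?lsaddE ?lsmulE ?lssubE ?lsoppE ?ls0E ?ls1E.

Theorem lemma4p2 (q : nat) (L : finFieldType)
  (hL : #|L| = (q ^ 2)%N) (hq : odd q)
  (iota : L) (hi0 : iota ^+ 2 != 0) (hiq : inFq q (iota ^+ 2))
  (hisq : ~ (exists s : L, inFq q s /\ s ^+ 2 = iota ^+ 2))
  (z : LS L)
  (hzOmega : ~ kinf q z)
  (hzF : is_imag_abs q z (ls_abs q z)) (hz1 : 1 <= ls_abs q z)
  (a b c d : LS L) (hg : inGL2kinf q a b c d) (hgz : mobius_eq iota a b c d z)
  (n : nat) :
  lambda_is_vn q a b c d n <-> ls_abs q z = (q%:Q) ^+ n.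
Proof.
have q1 : 1 < q%:Q.
  have := finNzRing_gt1 L; rewrite hL ltr1n; case: q {hL hq hiq hisq hzF hz1 hzOmega hg} => [|[|q']] //.
have qexp : forall u v : int, (q%:Q ^ u <= q%:Q ^ v) = (u <= v) by move=> u v; rewrite ler_eXz2l.
have zn0 : z <> 0 by move=> e; move: hz1; rewrite e ls_abs0 ler10.
have [D hD] := top_exists _ zn0.
have hzD : ls_abs q z = q%:Q ^ D by apply: ls_abs_top.
have D0 : 0 <= D by rewrite -(qexp 0 D) expr0z -hzD.
set x0 := lsu q L hL z; set y0 := lsv q L hL iota z; set io := lsconst iota.
have kx0 : kinf q x0 by apply: kinf_u.
have ky0 : kinf q y0 by apply: kinf_v.
have zdec : z = x0 + y0 * io by apply: uv_dec.
have bx0 : bnd x0 D by apply: bnd_u; case: hD.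
have by0 : bnd y0 D by apply: bnd_v; case: hD.
have iot : ls_top io 0 by apply: topC; apply: iota_neq0.
have hy0 : ls_top y0 D.
  have h := hzF.2 x0 kx0.
  have e : lssub z x0 = y0 * io by rewrite lssubE {1}zdec addrC addKr.
  rewrite e in h.
  have yn : y0 <> 0 by move=> y00; move: h; rewrite y00 mul0r ls_abs0 hzD; have := hz1; rewrite hzD; lra.
  have [Dy hDy] := top_exists _ yn.
  have hq' := top_mul _ _ _ _ hDy iot.
  rewrite (ls_abs_top _ _ _ hq') hzD qexp addr0 in h.
  have := top_le _ _ _ hDy by0.
  by move=> h'; have -> : D = Dy by apply/eqP; rewrite eq_le h h'.
have hgz' : z * (c * io + d) = a * io + b by apply/ls_eqP; exact: hgz.
set dl := lsconst (iota ^+ 2).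
have ioio : io * io = dl by rewrite CC /dl expr2.
have kdl : kinf q dl by apply: kinf_C.
case: hg => [[ka kb kc kd] hdet].
set P := x0 * d + dl * (y0 * c) - b; set Q := x0 * c + y0 * d - a.
have e0 : P + Q * io = 0.
  have -> : P + Q * io = (x0 + y0 * io) * (c * io + d) - (a * io + b) + y0 * c * (dl - io * io)
    by rewrite /P /Q; ring.
  by rewrite -zdec hgz' subrr ioio subrr mulr0 addr0.
have kP : kinf q P.
  by rewrite /P; apply: (kinf_sub _ _ hL) => //; apply: (kinf_add _ _ hL); apply: (kinf_mul _ _ hL) => //; apply: (kinf_mul _ _ hL).
have kQ : kinf q Q.
  by rewrite /Q; apply: (kinf_sub _ _ hL) => //; apply: (kinf_add _ _ hL); apply: (kinf_mul _ _ hL).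
have [P0 Q0] := sepS _ _ hL iota hisq P Q kP kQ e0.
have ha : a = x0 * c + y0 * d by apply/eqP; rewrite eq_sym -subr_eq0 -/Q Q0.
have hb : b = x0 * d + dl * (y0 * c) by apply/eqP; rewrite eq_sym -subr_eq0 -/P P0.
have hdet' : a * d - b * c <> 0 by move=> e; apply: hdet; apply/ls_eqP; exact: e.
set N := d * d - dl * (c * c).
have eD : a * d - b * c = y0 * N by rewrite ha hb /N; ring.
have cd : c <> 0 \/ d <> 0.
  case: (classic (c = 0)) => [c0|]; last by left.
  case: (classic (d = 0)) => [d0|]; last by right.
  by case: hdet'; rewrite c0 d0; ring.
have [m [bc bd cm]] := exists_m _ _ cd.
have bN : bnd N (m + m).
  apply: bnd_sub; first exact: bnd_mul.
  by apply: (bnd_mono _ _ _ (bnd_mul _ _ _ _ (bndC _) (bnd_mul _ _ _ _ bc bc))); rewrite add0r.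
have hN : ls_top N (m + m).
  split => //; rewrite /N lcB coef_mul_top // lcCM coef_mul_top // => e.
  have e' : coef d m * coef d m = iota ^+ 2 * (coef c m * coef c m).
    by apply/eqP; rewrite -subr_eq0 e.
  case: (eqVneq (coef c m) 0) => c0.
    have dn : coef d m != 0 by case: cm => // h; apply/eqP.
    by move: e'; rewrite c0 mulr0 mulr0 => /eqP; rewrite mulf_eq0 (negbTE dn).
  apply: hisq; exists (coef d m / coef c m); split.
    by apply: Fmul; [apply: kd | apply: Finv; apply: kc].
  rewrite expr_div_n [coef d m ^+ 2]expr2 [coef c m ^+ 2]expr2 e' mulfK //.
  exact: mulf_neq0.
have hdetD : ls_top (a * d - b * c) (D + (m + m)) by rewrite eD; apply: top_mul.
have ba : bnd a (D + m) by rewrite ha; apply: bnd_add; apply: bnd_mul.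
have bb : bnd b (D + m).
  rewrite hb; apply: bnd_add; first exact: bnd_mul.
  by apply: (bnd_mono _ _ _ (bnd_mul _ _ _ _ (bndC _) (bnd_mul _ _ _ _ by0 bc))); rewrite add0r.
have gb : forall w, in_gL0 q a b c d w -> bnd w.1 (D + m) /\ bnd w.2 m.
  move=> w [x [y [ox oy /veqP [-> ->]]]] /=.
  split.
    by apply: (bnd_mono _ _ _ (bnd_add _ _ _ (bnd_mul _ _ _ _ ba ox.2) (bnd_mul _ _ _ _ bb oy.2))); rewrite addr0.
  by apply: (bnd_mono _ _ _ (bnd_add _ _ _ (bnd_mul _ _ _ _ bc ox.2) (bnd_mul _ _ _ _ bd oy.2))); rewrite addr0.
have gL0ac : in_gL0 q a b c d (a, c).
  exists 1, 0; split; [split; [exact: (kinf_1 _ _ hL) | apply: bndC] | split; [exact: (kinf_0 _ _ hL) | apply: bnd0] |].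
  by apply/veqP => /=; lsn; split; ring.
have gL0bd : in_gL0 q a b c d (b, d).
  exists 0, 1; split; [split; [exact: (kinf_0 _ _ hL) | apply: bnd0] | split; [exact: (kinf_1 _ _ hL) | apply: bndC] |].
  by apply/veqP => /=; lsn; split; ring.
split.
- move=> [al [be [ga [de [s [[ial ibe iga ide] hu ks sn H]]]]]].
  set eps := al * de - be * ga.
  have [w [iw ew]] := hu; move/ls_eqP: ew => ew.
  have ew' : eps * w = 1 by exact: ew.
  have leps : low eps by apply: low_sub; apply: low_mul; [exact: ial.2|exact: ide.2|exact: ibe.2|exact: iga.2].
  have epsn : eps <> 0 by move=> e; move: ew'; rewrite e mul0r => /eqP; rewrite eq_sym oner_eq0.
  have wn : w <> 0 by move=> e; move: ew'; rewrite e mulr0 => /eqP; rewrite eq_sym oner_eq0.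
  have [te hte] := top_exists _ epsn; have [tw htw] := top_exists _ wn.
  have h1 := top_mul _ _ _ _ hte htw; rewrite ew' in h1.
  have h1' : ls_top (1 : LS L) 0 by apply: topC; apply: oner_neq0.
  have te0 := low_top _ _ leps hte; have tw0 := low_top _ _ iw.2 htw.
  have := top_uniq _ _ _ h1 h1' => e1.
  have hte0 : te = 0 by lia.
  rewrite hte0 in hte.
  have sn' : s <> 0 by move=> e; apply: sn; apply/ls_eqP.
  have [S hS] := top_exists _ sn'.
  have f1 : in_sLn q s n (matact al be ga de (a, c)).
    by apply: (H _).1; exists (a, c); split => //; apply/veqP.
  have f2 : in_sLn q s n (matact al be ga de (b, d)).
    by apply: (H _).1; exists (b, d); split => //; apply/veqP.
  have [x1 [y1 [ox1 oy1 /veqP [/= e11 e12]]]] := f1.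
  have [x2 [y2 [ox2 oy2 /veqP [/= e21 e22]]]] := f2.
  move: e11 e12 e21 e22; lsn => e11 e12 e21 e22.
  have iden : eps * (a * d - b * c) =
      (s * (lsTpow L n * x1)) * (s * y2) - (s * (lsTpow L n * x2)) * (s * y1).
    by rewrite -e11 -e12 -e21 -e22 /eps; ring.
  have bS := hS.2.
  have fwd : 0 + (D + (m + m)) <= S + (n%:Z + 0) + (S + 0).
    apply: (top_le _ _ _ (top_mul _ _ _ _ hte hdetD)); rewrite iden.
    have bx1 := ox1.2; have bx2 := ox2.2; have by1 := oy1.2; have by2 := oy2.2.
    apply: bnd_sub; apply: bnd_mul; apply: bnd_mul => //; apply: bnd_mul => //; apply: bndT.
  have r1 : in_sLn q s n (s * lsTpow L n, 0).
    exists 1, 0; split; [split; [exact: (kinf_1 _ _ hL) | apply: bndC] | split; [exact: (kinf_0 _ _ hL) | apply: bnd0] |].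
    by apply/veqP => /=; lsn; split; ring.
  have r2 : in_sLn q s n (0, s).
    exists 0, 1; split; [split; [exact: (kinf_0 _ _ hL) | apply: bnd0] | split; [exact: (kinf_1 _ _ hL) | apply: bndC] |].
    by apply/veqP => /=; lsn; split; ring.
  have [w1 [gw1 /veqP [/= e31 e32]]] := (H _).2 r1.
  have [w2 [gw2 /veqP [/= e41 e42]]] := (H _).2 r2.
  move: e31 e32 e41 e42; lsn => e31 e32 e41 e42.
  have [bw11 bw12] := gb _ gw1; have [bw21 bw22] := gb _ gw2.
  have i1 : de * (s * lsTpow L n) = eps * w1.1.
    rewrite e31; apply/eqP; rewrite -subr_eq0; apply/eqP.
    by transitivity (be * (ga * w1.1 + de * w1.2)); [rewrite /eps; ring | rewrite -e32 mulr0].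
  have i2 : ga * (s * lsTpow L n) = - (eps * w1.2).
    rewrite e31; apply/eqP; rewrite -subr_eq0; apply/eqP.
    by transitivity (al * (ga * w1.1 + de * w1.2)); [rewrite /eps; ring | rewrite -e32 mulr0].
  have i3 : al * s = eps * w2.2.
    rewrite e42; apply/eqP; rewrite -subr_eq0; apply/eqP.
    by transitivity (ga * (al * w2.1 + be * w2.2)); [rewrite /eps; ring | rewrite -e41 mulr0].
  have hsT := top_mul _ _ _ _ hS (topT n%:Z).
  have hDn : D = n%:Z.
    case: (classic (ga = 0)) => [g0|gn].
      have epsE : eps = al * de by rewrite /eps g0 mulr0 subr0.
      have aln : al <> 0 by move=> e; apply: epsn; rewrite epsE e mul0r.
      have den : de <> 0 by move=> e; apply: epsn; rewrite epsE e mulr0.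
      have [ta hta] := top_exists _ aln; have [td htd] := top_exists _ den.
      have ta0 := low_top _ _ ial.2 hta; have td0 := low_top _ _ ide.2 htd.
      have := top_uniq _ _ _ hte (eq_ind_r (fun e => ls_top e (ta + td)) (top_mul _ _ _ _ hta htd) epsE) => e2.
      have l1 := top_le _ _ _ (top_mul _ _ _ _ htd hsT) (eq_ind_r (fun e => bnd e (0 + (D + m))) (bnd_mul _ _ _ _ hte.2 bw11) i1).
      have l2 := top_le _ _ _ (top_mul _ _ _ _ hta hS) (eq_ind_r (fun e => bnd e (0 + m)) (bnd_mul _ _ _ _ hte.2 bw22) i3).
      lia.
    have [tg htg] := top_exists _ gn.
    have tg0 := low_top _ _ iga.2 htg.
    have l1 := top_le _ _ _ (top_mul _ _ _ _ htg hsT) (eq_ind_r (fun e => bnd e (0 + m)) (bnd_opp _ _ (bnd_mul _ _ _ _ hte.2 bw12)) i2).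
    lia.
  by rewrite hzD hDn.
- move=> habs.
  have hDn : D = n%:Z.
    have e : q%:Q ^ D = q%:Q ^ n%:Z by rewrite -hzD habs.
    by apply/eqP; rewrite eq_le -!qexp e lexx.
  exists 1, 0, 0, 1, (lsTpow L m).
  have i1 : inA q (1 : LS L) by split; [exact: (kinf_1 _ _ hL) | apply: low_C].
  have i0 : inA q (0 : LS L) by split; [exact: (kinf_0 _ _ hL) | apply: low_C].
  split => //.
  + exists 1; split => //; apply/ls_eqP; lsn; ring.
  + exact: (kinf_T _ _ hL _).
  + by move/ls_eqP => e; apply: (top_neq0 _ _ (@topT L m)); rewrite e.
  move=> v; split.
  + move=> [w [[x [y [ox oy /veqP [/= ew1 ew2]]]] /veqP [/= ev1 ev2]]].
    move: ew1 ew2 ev1 ev2; lsn => ew1 ew2 ev1 ev2.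
    exists (lsTpow L (- (m + n%:Z)) * (a * x + b * y)), (lsTpow L (- m) * (c * x + d * y)).
    split.
    * split.
        by apply: (kinf_mul _ _ hL); [exact: (kinf_T _ _ hL _) | apply: (kinf_add _ _ hL); apply: (kinf_mul _ _ hL) => //; [exact: ox.1 | exact: oy.1]].
      apply: (bnd_mono _ _ _ (bnd_mul _ _ _ _ (bndT _) (bnd_add _ _ _ (bnd_mul _ _ _ _ ba ox.2) (bnd_mul _ _ _ _ bb oy.2)))).
      lia.
    * split.
        by apply: (kinf_mul _ _ hL); [exact: (kinf_T _ _ hL _) | apply: (kinf_add _ _ hL); apply: (kinf_mul _ _ hL) => //; [exact: ox.1 | exact: oy.1]].
      apply: (bnd_mono _ _ _ (bnd_mul _ _ _ _ (bndT _) (bnd_add _ _ _ (bnd_mul _ _ _ _ bc ox.2) (bnd_mul _ _ _ _ bd oy.2)))).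
      lia.
    * apply/veqP => /=; lsn; rewrite ev1 ev2 ew1 ew2 mul1r mul0r addr0 mul0r add0r mul1r.
      by rewrite mulrA TT Tcancel Tcancel.
  + move=> [x' [y' [ox oy /veqP [/= ev1 ev2]]]].
    move: ev1 ev2; lsn => ev1 ev2.
    have [hDi bDi] := lsinvP _ _ hdetD.
    set Di := lsinv (a * d - b * c) (D + (m + m)) in hDi bDi.
    have kDelta : kinf q (a * d - b * c).
      by apply: (kinf_sub _ _ hL); apply: (kinf_mul _ _ hL).
    have kDi : kinf q Di by apply: (kinf_inv _ _ hL _ _ kDelta hDi).
    have kT : forall t, kinf q (lsTpow L t) by move=> t; exact: (kinf_T _ _ hL _).
    have kv1 : kinf q v.1 by rewrite ev1; apply: (kinf_mul _ _ hL) => //; apply: (kinf_mul _ _ hL) => //; exact: ox.1.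
    have kv2 : kinf q v.2 by rewrite ev2; apply: (kinf_mul _ _ hL) => //; exact: oy.1.
    have bv1 : bnd v.1 (m + (n%:Z + 0)) by rewrite ev1; apply: bnd_mul; [apply: bndT | apply: bnd_mul; [apply: bndT | exact: ox.2]].
    have bv2 : bnd v.2 (m + 0) by rewrite ev2; apply: bnd_mul; [apply: bndT | exact: oy.2].
    exists v; split; last by apply/veqP => /=; lsn; split; ring.
    exists (Di * (d * v.1 - b * v.2)), (Di * (a * v.2 - c * v.1)); split.
    * split.
        apply: (kinf_mul _ _ hL) => //; apply: (kinf_sub _ _ hL); apply: (kinf_mul _ _ hL) => //.
      apply: (bnd_mono _ _ _ (bnd_mul _ _ _ _ bDi (bnd_sub _ _ (D + (m + m)) _ _))).
      - by apply: (bnd_mono _ _ _ (bnd_mul _ _ _ _ bd bv1)); lia.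
      - by apply: (bnd_mono _ _ _ (bnd_mul _ _ _ _ bb bv2)); lia.
      - lia.
    * split.
        apply: (kinf_mul _ _ hL) => //; apply: (kinf_sub _ _ hL); apply: (kinf_mul _ _ hL) => //.
      apply: (bnd_mono _ _ _ (bnd_mul _ _ _ _ bDi (bnd_sub _ _ (D + (m + m)) _ _))).
      - by apply: (bnd_mono _ _ _ (bnd_mul _ _ _ _ ba bv2)); lia.
      - by apply: (bnd_mono _ _ _ (bnd_mul _ _ _ _ bc bv1)); lia.
      - lia.
    * apply/veqP => /=; lsn; split.
        by transitivity (((a * d - b * c) * Di) * v.1); [rewrite hDi mul1r | ring].
      by transitivity (((a * d - b * c) * Di) * v.2); [rewrite hDi mul1r | ring].
Qed.
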